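(* Let $J\subset K[x,y]_y$ be a binomial ideal and let $\xi\in\mathrm{Spec}(K[x,y]_y)$ be a point where $\mathrm{Eord}_\xi(J)=\theta>0$ is maximal (over $W$). Let $f=y^\gamma x^\alpha-bx^\beta\in J$ be a binomial without common factors, with $\alpha,\beta\in\mathbb N^s$, $\gamma\in\mathbb Z^{n-s}$, $b\in K$, $0<|\alpha|\le|\beta|$, such that $\mathrm{Eord}_\xi(f)=\theta=|\alpha|$, $\xi_i=0$ for all $i$ with $\alpha_i>0$, and $y^\gamma(\xi)\neq0$. Then, in a neighbourhood of $\xi$, $\mathrm{ESing}(J,\theta)\subseteq\{x_i=0\}$ for some $i$ with $\alpha_i>0$.
   Context: $K$ is an algebraically closed field of arbitrary characteristic; $W=\mathrm{Spec}(K[x_1,\dots,x_s,y_1,\dots,y_{n-s}]_y)$ (localization at $y_1\cdots y_{n-s}$). $E\cap W=\{V(x_1),\dots,V(x_s)\}$. For $\xi\in W$ let $\Lambda(\xi)=\{i:\xi\in V(x_i)\}$ and $E^0_{\Lambda(\xi)}$ the stratum of points lying on $V(x_i)$ exactly for $i\in\Lambda(\xi)$; its ideal is generated by the $x_i$, $i\in\Lambda(\xi)$. $\mathrm{Eord}_\xi(J)=\max\{m\in\mathbb N: J_\xi\subset(I(E^0_{\Lambda(\xi)})_\xi)^m\}$, $\mathrm{Eord}_\xi(f)=\mathrm{Eord}_\xi(\langle f\rangle)$, and $\mathrm{ESing}(J,\theta)=\{\xi:\mathrm{Eord}_\xi(J)\ge\theta\}$. A binomial ideal is an ideal generated by elements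 $x^{\lambda}(1-\mu y^{\delta})$ or $x^{\nu}(y^{\gamma}x^{\alpha}-bx^{\beta})$ with $\lambda,\nu,\alpha,\beta\in\mathbb N^s$, $\gamma,\delta\in\mathbb Z^{n-s}$, $\mu,b\in K$, each $y^\gamma x^\alpha-bx^\beta$ without common factors and $0<|\alpha|\le|\beta|$. *)

(* Defs.v *)
From HB Require Import structures.
From mathcomp Require Import all_boot all_order all_algebra.
From mathcomp Require Import mpoly.
Set Implicit Arguments. Unset Strict Implicit. Unset Printing Implicit Defensive.
Import Order.TTheory GRing.Theory Num.Theory.
Local Open Scope ring_scope.

Section Ideals.
Variable R : comRingType.

Definition ideal_gen (G : R -> Prop) (g : R) : Prop :=
  exists s : seq (R * R), (forall p, p \in s -> G p.2) /\
                          g = \sum_(p <- s) p.1 * p.2.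

Fixpoint ideal_pow (I : R -> Prop) (m : nat) : R -> Prop :=
  match m with
  | 0 => fun _ => True
  | m'.+1 => ideal_gen (fun g => exists a b, ideal_pow I m' a /\ I b /\ g = a * b)
  end.

Definition is_ideal (q : R -> Prop) : Prop :=
  [/\ q 0, (forall a b, q a -> q b -> q (a + b)) & (forall r a, q a -> q (r * a))].

Definition prime_ideal (q : R -> Prop) : Prop :=
  [/\ is_ideal q, ~ q 1 & (forall a b, q (a * b) -> q a \/ q b)].
End Ideals.

Section Setting.
Variables (K : closedFieldType) (s t : nat).
Local Notation P := {mpoly K[s + t]}.

Definition xv (i : 'I_s) : P := 'X_(lshift t i).
Definition yv (j : 'I_t) : P := 'X_(rshift s j).
Definition xmon (a : 'I_s -> nat) : P := \prod_(i < s) xv i ^+ a i.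
Definition ymon (d : 'I_t -> nat) : P := \prod_(j < t) yv j ^+ d j.
Definition yprod : P := \prod_(j < t) yv j.

Definition ypos (g : 'I_t -> int) : 'I_t -> nat :=
  fun j => match g j with Posz k => k | Negz _ => 0%N end.
Definition yneg (g : 'I_t -> int) : 'I_t -> nat :=
  fun j => match g j with Posz _ => 0%N | Negz k => k.+1 end.

(* An ideal J of A = K[x,y]_y is represented by its contraction J' to P.
   sat G = contraction to P of the A-ideal generated by G. *)
Definition sat (G : P -> Prop) (g : P) : Prop :=
  exists k, ideal_gen G (yprod ^+ k * g).

(* points of W = Spec A : primes of P not containing y_1...y_t *)
Definition inW (q : P -> Prop) : Prop := prime_ideal q /\ ~ q yprod.

(* I(E^0_{Lambda(xi)}) = ideal generated by the x_i with xi in V(x_i) *)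
Definition IE (q : P -> Prop) : P -> Prop :=
  ideal_gen (fun g => exists i, q (xv i) /\ g = xv i).

(* J_xi subset (I(E^0_Lambda)_xi)^m, in the local ring A_xi = P_q *)
Definition EordGe (q : P -> Prop) (J : P -> Prop) (m : nat) : Prop :=
  forall g, J g -> exists u, ~ q u /\ ideal_pow (IE q) m (u * g).

Definition Eord_is (q : P -> Prop) (J : P -> Prop) (m : nat) : Prop :=
  EordGe q J m /\ (forall m', EordGe q J m' -> (m' <= m)%N).

Definition ESing (J : P -> Prop) (theta : nat) (q : P -> Prop) : Prop :=
  inW q /\ EordGe q J theta.

(* P-representative (unit multiple y^{gamma^-}) of y^gamma x^alpha - b x^beta *)
Definition binom (g : 'I_t -> int) (al be : 'I_s -> nat) (b : K) : P :=
  ymon (ypos g) * xmon al - b *: (ymon (yneg g) * xmon be).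

Definition binom_ok (al be : 'I_s -> nat) : Prop :=
  [/\ forall i, al i = 0%N \/ be i = 0%N,
      (0 < \sum_(i < s) al i)%N & (\sum_(i < s) al i <= \sum_(i < s) be i)%N].

(* allowed generators: x^lambda (1 - mu y^delta) (times the unit y^{delta^-})
   and x^nu (y^gamma x^alpha - b x^beta) *)
Definition binomial_gen (g : P) : Prop :=
  (exists (la : 'I_s -> nat) (mu : K) (d : 'I_t -> int),
      g = xmon la * (ymon (yneg d) - mu *: ymon (ypos d)))
  \/ (exists (nu : 'I_s -> nat) (ga : 'I_t -> int) (al be : 'I_s -> nat) (b : K),
      binom_ok al be /\ g = xmon nu * binom ga al be b).

Definition binomial_ideal (J : P -> Prop) : Prop :=
  exists G : P -> Prop, (forall g, G g -> binomial_gen g) /\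
                        (forall g, J g <-> sat G g).
End Setting.

Arguments xv {K s t}.
Arguments yv {K s t}.
Arguments xmon {K s t}.
Arguments ymon {K s t}.
Arguments yprod {K s t}.
Arguments sat {K s t}.
Arguments inW {K s t}.
Arguments IE {K s t}.
Arguments EordGe {K s t}.
Arguments Eord_is {K s t}.
Arguments ESing {K s t}.
Arguments binom {K s t}.
Arguments binomial_gen {K s t}.
Arguments binomial_ideal {K s t}.

(* Main.v *)
Require Import Defs.
From HB Require Import structures.
From mathcomp Require Import all_boot all_order all_algebra.
From mathcomp Require Import mpoly.
From mathcomp Require Import ring zify.
From Stdlib Require Import ClassicalEpsilon.
Import Order.TTheory GRing.Theory Num.Theory.
Local Open Scope ring_scope.

Lemma sub_lt_aux c (j : 'I_c) : (c - @lift c.+1 ord0 j < c)%N.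
Proof. rewrite lift0 /=; have := ltn_ord j; lia. Qed.

Section Aux.
Variables (K : closedFieldType) (s t : nat).
Local Notation P := {mpoly K[s + t]}.
Variable q : P -> Prop.
Hypothesis Hq : inW q.

Lemma Hid : is_ideal q. Proof. by case: Hq => -[]. Qed.
Lemma q0 : q 0. Proof. by case: Hid. Qed.
Lemma qD a b : q a -> q b -> q (a + b). Proof. by case: Hid => _ H _; apply: H. Qed.
Lemma qM r a : q a -> q (r * a). Proof. by case: Hid => _ _ H; apply: H. Qed.
Lemma qN a : q a -> q (- a). Proof. by move=> h; rewrite -mulN1r; apply: qM. Qed.
Lemma qB a b : q a -> q b -> q (a - b). Proof. by move=> ha hb; apply: qD => //; apply: qN. Qed.

Definition inq (p : P) : bool := if excluded_middle_informative (q p) then true else false.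
Lemma inqT p : q p -> inq p = true.
Proof. by rewrite /inq; case: excluded_middle_informative. Qed.
Lemma inqF p : ~ q p -> inq p = false.
Proof. by rewrite /inq; case: excluded_middle_informative. Qed.
Lemma inqE p : inq p -> q p.
Proof. by rewrite /inq; case: excluded_middle_informative. Qed.

Definition hh (k : 'I_(s + t)) : {poly P} :=
  if inq 'X_k then 'X * ('X_k)%:P else ('X_k)%:P.
Definition ff : {rmorphism K -> {poly P}} := (polyC \o (@mpolyC (s + t) K)).
Local Notation psi := (mmap ff hh).

Lemma psiM a b : psi (a * b) = psi a * psi b. Proof. exact: rmorphM. Qed.
Lemma psiD a b : psi (a + b) = psi a + psi b. Proof. exact: rmorphD. Qed.
Lemma psiB a b : psi (a - b) = psi a - psi b. Proof. exact: rmorphB. Qed.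
Lemma psi1 : psi 1 = 1. Proof. exact: rmorph1. Qed.
Lemma psi0 : psi 0 = 0. Proof. exact: rmorph0. Qed.
Lemma psiXn a e : psi (a ^+ e) = psi a ^+ e. Proof. exact: rmorphXn. Qed.
Lemma psi_sum (S : seq (P * P)) F : psi (\sum_(p <- S) F p) = \sum_(p <- S) psi (F p).
Proof. exact: rmorph_sum. Qed.
Lemma psi_prodr m (F : 'I_m -> P) : psi (\prod_(i < m) F i) = \prod_(i < m) psi (F i).
Proof. exact: rmorph_prod. Qed.

Lemma psiX k : psi 'X_k = hh k.
Proof. by rewrite mmapX mmap1U. Qed.

Lemma psiZ c p : psi (c *: p) = (c%:MP)%:P * psi p.
Proof. by rewrite mmapZ. Qed.

Definition Dk k (z : {poly P}) := exists r, z = 'X^k * r.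

Lemma Dk_sum k (S : seq (P * P)) F :
  (forall p, p \in S -> Dk k (F p)) -> Dk k (\sum_(p <- S) F p).
Proof.
elim: S => [|x S IH] H; first by exists 0; rewrite big_nil mulr0.
rewrite big_cons.
have [r1 ->] := H x (mem_head _ _).
have [r2 ->] : Dk k (\sum_(p <- S) F p).
  by apply: IH => p pS; apply: H; rewrite inE pS orbT.
by exists (r1 + r2); rewrite mulrDr.
Qed.

Lemma gen_D k G g : ideal_gen G g -> (forall x, G x -> Dk k (psi x)) -> Dk k (psi g).
Proof.
case=> S [HS ->] HG; rewrite psi_sum; apply: Dk_sum => p pS.
rewrite psiM; have [r ->] := HG _ (HS p pS).
by exists (psi p.1 * r); rewrite mulrCA.
Qed.

Lemma powD m g : ideal_pow (IE q) m g -> Dk m (psi g).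
Proof.
elim: m g => [|m IH] g Hg; first by exists (psi g); rewrite expr0 mul1r.
move: Hg => /= Hg; apply: (gen_D _ _ _ Hg) => x [a [b [Ha [Hb ->]]]].
have [r1 e1] := IH a Ha.
have [r2 e2] : Dk 1 (psi b).
  apply: (gen_D _ _ _ Hb) => y [i [qi ->]].
  exists ('X_(lshift t i))%:P; rewrite /xv psiX /hh inqT //.
by exists (r1 * r2); rewrite psiM e1 e2 mulrACA -exprD addn1.
Qed.

Definition ee (p : P) : P := (psi p)`_0.
Definition Good (p : P) := q (p - ee p).

Lemma GoodD a b : Good a -> Good b -> Good (a + b).
Proof.
rewrite /Good /ee psiD (coefD (psi a) (psi b) 0) => ha hb.
rewrite (opprD ((psi a)`_0) ((psi b)`_0)) (addrACA a b).
exact: (qD _ _ ha hb).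
Qed.

Lemma GoodM a b : Good a -> Good b -> Good (a * b).
Proof.
rewrite /Good /ee psiM (coef0M (psi a) (psi b)) => ha hb.
have -> : a * b - (psi a)`_0 * (psi b)`_0 =
  b * (a - (psi a)`_0) + (psi a)`_0 * (b - (psi b)`_0).
  by rewrite mulrBr mulrBr addrA (mulrC b a) (mulrC b) subrK.
exact: (qD _ _ (qM b _ ha) (qM _ _ hb)).
Qed.

Lemma Good1 : Good 1.
Proof. rewrite /Good /ee psi1 (coefC (1 : P) 0) /= subrr; exact: q0. Qed.

Lemma GoodX k : Good 'X_k.
Proof.
rewrite /Good /ee psiX /hh; case: ifP => hk.
  rewrite (coefXM ('X_k)%:P 0) subr0; exact: (inqE _ hk).
rewrite (coefC ('X_k : P) 0) /= subrr; exact: q0.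
Qed.

Lemma GoodZ c p : Good p -> Good (c *: p).
Proof.
rewrite /Good /ee psiZ (coefCM c%:MP (psi p) 0) -!mul_mpolyC => h.
rewrite -(mulrBr c%:MP p).
exact: (qM _ _ h).
Qed.

Lemma Good_all p : Good p.
Proof.
rewrite (mpolyE p); apply: (big_ind Good).
- rewrite /Good /ee psi0 (coef0 P 0) subrr; exact: q0.
- exact: GoodD.
move=> m _; apply: GoodZ; rewrite mpolyXE_id.
apply: (big_ind Good); [exact: Good1 | exact: GoodM |] => i _.
elim: (m i) => [|k IH]; first by rewrite expr0; apply: Good1.
rewrite exprS; exact: (GoodM _ _ (GoodX i) IH).
Qed.

Lemma ee_notq u : ~ q u -> ee u != 0.
Proof.
move=> nu; apply/eqP => e0; apply: nu.
have -> : u = (u - ee u) + ee u by rewrite subrK.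
rewrite {2}e0 addr0; exact: (Good_all u).
Qed.

Lemma psi_pow k e : psi ('X_k ^+ e) = 'X^(inq 'X_k * e) * (('X_k ^+ e)%:P).
Proof.
rewrite psiXn psiX /hh rmorphXn; case: (inq 'X_k) => /=.
  by rewrite mul1n exprMn.
by rewrite mul0n expr0 mul1r.
Qed.

Lemma psi_prod m (phi : 'I_m -> 'I_(s + t)) (e : 'I_m -> nat) :
  psi (\prod_(i < m) 'X_(phi i) ^+ e i) =
  'X^(\sum_(i < m) inq 'X_(phi i) * e i) * (\prod_(i < m) 'X_(phi i) ^+ e i)%:P.
Proof.
rewrite psi_prodr (eq_bigr _ (fun i _ => psi_pow (phi i) (e i))) big_split /=.
by rewrite -expr_sum rmorph_prod.
Qed.

Lemma yv_notq j : ~ q (yv j).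
Proof.
move=> h; case: Hq => _; apply.
by rewrite /yprod (bigD1 j) //= mulrC; apply: qM.
Qed.

Lemma psi_ymon (g : 'I_t -> nat) : psi (ymon g) = (ymon g)%:P.
Proof.
rewrite /ymon /yv psi_prod big1 ?expr0 ?mul1r // => j _.
by rewrite inqF //; apply: yv_notq.
Qed.

Lemma psi_xmon (g : 'I_s -> nat) :
  psi (xmon g) = 'X^(\sum_(i < s) inq (xv i) * g i) * (xmon g)%:P.
Proof. by rewrite /xmon /xv psi_prod. Qed.


Lemma meval_Xn (v : 'I_(s + t) -> K) k e : meval v ('X_k ^+ e : P) = v k ^+ e.
Proof.
elim: e => [|e IH]; first by rewrite !expr0 meval1.
by rewrite !exprS mevalM mevalXU IH.
Qed.

Lemma meval_prod (v : 'I_(s + t) -> K) m (F : 'I_m -> P) :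
  meval v (\prod_(i < m) F i) = \prod_(i < m) meval v (F i).
Proof. exact: (big_morph _ (mevalM v) (meval1 v)). Qed.

Lemma meval_ymon v g : meval v (ymon g : P) = \prod_(j < t) v (rshift s j) ^+ g j.
Proof. by rewrite /ymon meval_prod; apply: eq_bigr => j _; rewrite /yv meval_Xn. Qed.

Lemma meval_xmon v g : meval v (xmon g : P) = \prod_(i < s) v (lshift t i) ^+ g i.
Proof. by rewrite /xmon meval_prod; apply: eq_bigr => j _; rewrite /xv meval_Xn. Qed.

Lemma AB_nz (yp yn : 'I_t -> nat) (al be : 'I_s -> nat) (b : K) i0 (z : P) :
  (0 < al i0)%N -> be i0 = 0%N -> z = 0 \/ z = ymon yn * xmon be ->
  ymon yp * xmon al - b%:MP * z != 0.
Proof.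
move=> hal hbe hz.
pose v1 : 'I_(s + t) -> K := fun _ => 1.
pose v0 : 'I_(s + t) -> K := fun k => if k == lshift t i0 then 0 else 1.
have e1y g : meval v1 (ymon g : P) = 1.
  by rewrite meval_ymon big1 // => j _; rewrite /v1 expr1n.
have e1x g : meval v1 (xmon g : P) = 1.
  by rewrite meval_xmon big1 // => j _; rewrite /v1 expr1n.
have e0y g : meval v0 (ymon g : P) = 1.
  by rewrite meval_ymon big1 // => j _; rewrite /v0 eq_rlshift expr1n.
have e0a : meval v0 (xmon al : P) = 0.
  rewrite meval_xmon (bigD1 i0) //= /v0 eqxx expr0n.
  by case: (al i0) hal => // n _; rewrite mul0r.
have e0b : meval v0 (xmon be : P) = 1.
  rewrite meval_xmon big1 // => j _; rewrite /v0 eq_lshift.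
  by case: eqP => [->|_]; rewrite ?hbe ?expr0 ?expr1n.
apply/eqP => h.
have h1 := congr1 (meval v1) h; have h0 := congr1 (meval v0) h.
rewrite mevalB mevalM mevalM meval0 mevalC in h1.
rewrite mevalB mevalM mevalM meval0 mevalC in h0.
rewrite e1y e1x mul1r in h1; rewrite e0y e0a mul1r sub0r in h0.
case: hz => hz; rewrite hz in h1 h0.
  by move: h1; rewrite meval0 mulr0 subr0 => /eqP; rewrite oner_eq0.
move: h0 h1; rewrite !mevalM e0y e0b e1y e1x !mulr1 => /eqP.
rewrite oppr_eq0 => /eqP ->; rewrite subr0 => /eqP; rewrite oner_eq0.
done.
Qed.

Lemma key (ga : 'I_t -> int) (al be : 'I_s -> nat) (b : K) i0 u :
  (0 < al i0)%N -> ~ q (xv i0) -> binom_ok al be -> ~ q u ->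
  ideal_pow (IE q) (\sum_(i < s) al i) (u * binom ga al be b) -> False.
Proof.
move=> hal nq [hdisj _ _] nu hpow.
have hbe : be i0 = 0%N by case: (hdisj i0) => // h; rewrite h in hal.
set A : P := ymon (ypos ga) * xmon al.
set B : P := ymon (yneg ga) * xmon be.
set dA := (\sum_(i < s) inq (xv i) * al i)%N.
set dB := (\sum_(i < s) inq (xv i) * be i)%N.
set f := binom ga al be b.
have psif : psi f = 'X^dA * A%:P - (b%:MP)%:P * ('X^dB * B%:P).
  rewrite /f /binom psiB psiZ !psiM !psi_ymon !psi_xmon /A /B !polyCM.
  by rewrite (mulrCA (ymon (ypos ga))%:P) (mulrCA (ymon (yneg ga))%:P).
have hc : (psi f)`_dA = A - b%:MP * (B * (dA == dB)%:R).
  rewrite psif (coefB _ _ dA) (coefXnM dA (A%:P) dA) ltnn subnn (coefC A 0) /=.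
  by rewrite (coefCM (b%:MP) _ dA) (coefMC B 'X^dB dA) (coefXn _ dB dA) (mulrC _ B).
have nz : (psi f)`_dA != 0.
  rewrite hc /A /B; apply: (AB_nz (ypos ga) (yneg ga) al be b i0 _ hal hbe).
  by case: eqP => _; [right; rewrite mulr1 | left; rewrite mulr0].
have dlt : (dA < \sum_(i < s) al i)%N.
  rewrite /dA (bigD1 i0) //= [X in (_ < X)%N](bigD1 i0) //= (inqF (xv i0) nq) mul0n add0n.
  apply: (@leq_ltn_trans (\sum_(i < s | i != i0) al i)).
    by apply: leq_sum => i _; case: inq; rewrite ?mul1n ?mul0n.
  by rewrite -{1}(add0n (\sum_(i < s | i != i0) al i)) ltn_add2r.
have exP : exists k, (fun k => (psi f)`_k != 0) k by exists dA.
case: (ex_minnP exP) => c hc0 hmin.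
have hcd : (c <= dA)%N := hmin _ nz.
have [r hr] := powD _ _ hpow.
rewrite psiM in hr.
have hcoef : (psi u * psi f)`_c = 0.
  rewrite hr (coefXnM _ r c) ifT //; exact: (leq_ltn_trans hcd dlt).
move: hcoef.
rewrite (coefM (psi u) (psi f) c) big_ord_recl.
have hz : \sum_(i < c) (psi u)`_(lift ord0 i) * (psi f)`_(c - lift ord0 i) = 0.
  apply: big1 => j _.
  have hlt : (c - lift ord0 j < c)%N.
    exact: (sub_lt_aux c j).
  have hfz : (psi f)`_(c - lift ord0 j) == 0.
    apply: contraLR hlt => H; rewrite -leqNgt; exact: (hmin _ H).
  by rewrite [X in _ * X](eqP hfz) mulr0.
rewrite hz addr0.
have -> : (c - @nat_of_ord c.+1 ord0)%N = c by rewrite subn0.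
have := mulf_neq0 (ee_notq u nu) hc0; rewrite /ee => /eqP; exact.
Qed.
End Aux.

Theorem mainTheorem8 (K : closedFieldType) (s t : nat)
  (J : {mpoly K[s + t]} -> Prop) (xi : {mpoly K[s + t]} -> Prop) (theta : nat)
  (ga : 'I_t -> int) (al be : 'I_s -> nat) (b : K) :
  binomial_ideal J ->
  inW xi ->
  (0 < theta)%N ->
  Eord_is xi J theta ->
  (forall q, inW q -> ~ EordGe q J theta.+1) ->
  binom_ok al be ->
  J (binom ga al be b) ->
  Eord_is xi (sat (fun g => g = binom ga al be b)) theta ->
  theta = (\sum_(i < s) al i)%N ->
  (forall i, (0 < al i)%N -> xi (@xv K s t i)) ->
  ~ xi (ymon (ypos ga) * ymon (yneg ga)) ->
  exists i : 'I_s, (0 < al i)%N /\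
    exists h : {mpoly K[s + t]}, ~ xi h /\
      forall q, inW q -> ~ q h -> ESing J theta q -> q (@xv K s t i).
Proof.
move=> _ Hxi _ _ _ Hok Jf _ Htheta _ _.
have [i0 hi0] : exists i0, (0 < al i0)%N.
  case: (Hok) => _ hpos _.
  case: (pickP (fun i => 0 < al i)%N) => [i hi | H]; first by exists i.
  exfalso; move: hpos; rewrite big1 // => i _.
  by move: (H i) => /negbT; rewrite lt0n negbK => /eqP.
exists i0; split => //; exists 1; split.
  by case: Hxi => -[].
move=> q Wq _ [_ Hord].
case: (Hord _ Jf) => u [nu Hu].
case: (excluded_middle_informative (q (xv i0))) => // nq; exfalso.
rewrite Htheta in Hu.
exact (@key K s t q Wq ga al be b i0 u hi0 nq Hok nu Hu).
Qed.
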